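(* The set consisting of the three identities $(xy)(zt)=(xz)(yt)$, $(xy)(zt)=(ty)(zx)$ and $(xy^2)y^2=x$ is a basis for $\Sigma_{2,3,4}$.
   Context: $y^2$ denotes $yy$. $\Sigma_{2,3,4}$ is the set of groupoid identities satisfied in the integers $\mathbb{Z}$ by each of the binary operations $x-y$, $-x+y$ and $-x-y$. A basis is a set of identities whose equational consequences are exactly $\Sigma_{2,3,4}$. *)

(* Defs.v *)
From Stdlib Require Import ZArith List.
Import ListNotations.

Inductive term : Type :=
| Var : nat -> term
| Op : term -> term -> term.

Definition identity := (term * term)%type.

Fixpoint eval {T : Type} (op : T -> T -> T) (v : nat -> T) (s : term) : T :=
  match s with
  | Var n => v n
  | Op a b => op (eval op v a) (eval op v b)
  end.

Fixpoint subst (sg : nat -> term) (s : term) : term :=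
  match s with
  | Var n => sg n
  | Op a b => Op (subst sg a) (subst sg b)
  end.

Inductive derivable (E : list identity) : term -> term -> Prop :=
| d_ax : forall s t sg, In (s, t) E -> derivable E (subst sg s) (subst sg t)
| d_refl : forall s, derivable E s s
| d_sym : forall s t, derivable E s t -> derivable E t s
| d_trans : forall s t u, derivable E s t -> derivable E t u -> derivable E s u
| d_cong : forall s1 t1 s2 t2, derivable E s1 t1 -> derivable E s2 t2 ->
    derivable E (Op s1 s2) (Op t1 t2).

Definition op2 (x y : Z) : Z := (x - y)%Z.
Definition op3 (x y : Z) : Z := (- x + y)%Z.
Definition op4 (x y : Z) : Z := (- x - y)%Z.

Definition satisfied_Z (op : Z -> Z -> Z) (s t : term) : Prop :=
  forall v : nat -> Z, eval op v s = eval op v t.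

Definition Sigma234 (s t : term) : Prop :=
  satisfied_Z op2 s t /\ satisfied_Z op3 s t /\ satisfied_Z op4 s t.

Definition vx := Var 0.
Definition vy := Var 1.
Definition vz := Var 2.
Definition vt := Var 3.
Definition sq (s : term) : term := Op s s.

Definition basis_234 : list identity :=
  [ (Op (Op vx vy) (Op vz vt), Op (Op vx vz) (Op vy vt));
    (Op (Op vx vy) (Op vz vt), Op (Op vt vy) (Op vz vx));
    (Op (Op vx (sq vy)) (sq vy), vx) ].

(* Main.v *)
Require Import Defs.
From Stdlib Require Import ZArith List Lia Setoid Morphisms Permutation.
Import ListNotations.

Definition D := derivable basis_234.

#[export] Instance D_equiv : Equivalence D.
Proof. split; red; [apply d_refl| apply d_sym| apply d_trans]. Qed.

#[export] Instance Op_proper : Proper (D ==> D ==> D) Op.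
Proof. intros a b H c d H'. apply d_cong; auto. Qed.

Lemma axM x y z w : D (Op (Op x y) (Op z w)) (Op (Op x z) (Op y w)).
Proof.
  exact (d_ax basis_234 (Op (Op vx vy) (Op vz vt)) (Op (Op vx vz) (Op vy vt))
    (fun n => match n with 0 => x | 1 => y | 2 => z | _ => w end) (or_introl eq_refl)).
Qed.

Lemma axP x y z w : D (Op (Op x y) (Op z w)) (Op (Op w y) (Op z x)).
Proof.
  exact (d_ax basis_234 (Op (Op vx vy) (Op vz vt)) (Op (Op vt vy) (Op vz vx))
    (fun n => match n with 0 => x | 1 => y | 2 => z | _ => w end) (or_intror (or_introl eq_refl))).
Qed.

Lemma axI x y : D (Op (Op x (Op y y)) (Op y y)) x.
Proof.
  exact (d_ax basis_234 (Op (Op vx (sq vy)) (sq vy)) vx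
    (fun n => match n with 0 => x | _ => y end) (or_intror (or_intror (or_introl eq_refl)))).
Qed.

Lemma entropic f : forall s1 s2,
  D (Op (subst s1 f) (subst s2 f)) (subst (fun n => Op (s1 n) (s2 n)) f).
Proof.
  induction f as [n|f1 IH1 f2 IH2]; intros s1 s2; simpl.
  - reflexivity.
  - rewrite axM. apply Op_proper; auto.
Qed.

Lemma interchange g : forall f (sg : nat -> nat -> term),
  D (subst (fun m => subst (sg m) f) g) (subst (fun n => subst (fun m => sg m n) g) f).
Proof.
  induction g as [m|g1 IH1 g2 IH2]; intros f sg.
  - simpl. reflexivity.
  - simpl. etransitivity; [apply Op_proper; [apply (IH1 f sg)|apply (IH2 f sg)]|].
    exact (entropic f (fun n => subst (fun m => sg m n) g1) (fun n => subst (fun m => sg m n) g2)).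
Qed.

Definition P3 := Op (Op (Var 0) (Op (Var 1) (Var 1))) (Op (Var 1) (Var 2)).
Definition p x y z := Op (Op x (Op y y)) (Op y z).
Definition env3 {A : Type} (x y z : A) (n : nat) : A := match n with 0 => x | 1 => y | _ => z end.

#[export] Instance p_proper : Proper (D ==> D ==> D ==> D) p.
Proof. intros a a' Ha b b' Hb c c' Hc. unfold p. rewrite Ha, Hb, Hc. reflexivity. Qed.

Lemma p_inter a b c d e f g h i :
  D (p (p a b c) (p d e f) (p g h i)) (p (p a d g) (p b e h) (p c f i)).
Proof.
  exact (interchange P3 P3 (env3 (env3 a b c) (env3 d e f) (env3 g h i))).
Qed.

Lemma Op_p a b c d e f : D (Op (p a b c) (p d e f)) (p (Op a d) (Op b e) (Op c f)).
Proof. exact (entropic P3 (env3 a b c) (env3 d e f)). Qed.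

Lemma p_xyy x y : D (p x y y) x.
Proof. apply axI. Qed.

Lemma p_yyx y x : D (p y y x) x.
Proof. unfold p. rewrite axP. apply axI. Qed.
Definition o := Var 0.
Definition pl x y := p x o y.
Definition ng x := p o x o.
Definition k := Op o o.
Definition a x := p (Op x o) k o.
Definition b x := p (Op o x) k o.

#[export] Instance pl_proper : Proper (D ==> D ==> D) pl.
Proof. intros x x' H y y' H'. unfold pl. rewrite H, H'. reflexivity. Qed.
#[export] Instance ng_proper : Proper (D ==> D) ng.
Proof. intros x x' H. unfold ng. rewrite H. reflexivity. Qed.
#[export] Instance a_proper : Proper (D ==> D) a.
Proof. intros x x' H. unfold a. rewrite H. reflexivity. Qed.
#[export] Instance b_proper : Proper (D ==> D) b.
Proof. intros x x' H. unfold b. rewrite H. reflexivity. Qed.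

Lemma pl_o_r x : D (pl x o) x.
Proof. apply p_xyy. Qed.
Lemma pl_o_l x : D (pl o x) x.
Proof. apply p_yyx. Qed.
Lemma pl_comm x y : D (pl x y) (pl y x).
Proof. apply axP. Qed.
Lemma pl_inter x y z w : D (pl (pl x y) (pl z w)) (pl (pl x z) (pl y w)).
Proof.
  unfold pl.
  transitivity (p (p x o y) (p o o o) (p z o w)).
  { apply p_proper; [reflexivity| symmetry; apply p_xyy| reflexivity]. }
  rewrite p_inter. rewrite (p_xyy o o). reflexivity.
Qed.
Lemma pl_assoc x y z : D (pl (pl x y) z) (pl x (pl y z)).
Proof.
  transitivity (pl (pl x y) (pl o z)).
  { apply pl_proper; [reflexivity| symmetry; apply pl_o_l]. }
  rewrite pl_inter. rewrite pl_o_r. reflexivity.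
Qed.
Lemma ng_r x : D (pl x (ng x)) o.
Proof.
  unfold pl, ng.
  transitivity (p (p x o o) (p o o o) (p o x o)).
  { apply p_proper; [symmetry; apply p_xyy| symmetry; apply p_xyy| reflexivity]. }
  rewrite p_inter. rewrite (p_xyy x o), (p_yyx o x), (p_xyy o o), (p_yyx x o). reflexivity.
Qed.
Lemma cancel_r x y s : D (pl x s) (pl y s) -> D x y.
Proof.
  intro H.
  transitivity (pl (pl x s) (ng s)).
  { rewrite pl_assoc, ng_r, pl_o_r. reflexivity. }
  rewrite H. rewrite pl_assoc, ng_r, pl_o_r. reflexivity.
Qed.

Inductive vexp := VZ | VA (t : term) | VP (e1 e2 : vexp).
Fixpoint vint e := match e with VZ => o | VA t => t | VP e1 e2 => pl (vint e1) (vint e2) end.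
Fixpoint vfl e := match e with VZ => [] | VA t => [t] | VP e1 e2 => vfl e1 ++ vfl e2 end.
Fixpoint lsum l := match l with [] => o | x :: l => pl x (lsum l) end.

Lemma lsum_app l1 l2 : D (lsum (l1 ++ l2)) (pl (lsum l1) (lsum l2)).
Proof.
  induction l1 as [|x l1 IH]; simpl.
  - symmetry; apply pl_o_l.
  - rewrite IH. symmetry; apply pl_assoc.
Qed.
Lemma vint_fl e : D (vint e) (lsum (vfl e)).
Proof.
  induction e; simpl.
  - reflexivity.
  - symmetry; apply pl_o_r.
  - rewrite IHe1, IHe2, lsum_app. reflexivity.
Qed.
Lemma lsum_perm l1 l2 : Permutation l1 l2 -> D (lsum l1) (lsum l2).
Proof.
  induction 1; simpl.
  - reflexivity.
  - rewrite IHPermutation; reflexivity.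
  - rewrite <- !pl_assoc. rewrite (pl_comm y x). reflexivity.
  - etransitivity; eauto.
Qed.
Lemma ac_lemma e1 e2 : Permutation (vfl e1) (vfl e2) -> D (vint e1) (vint e2).
Proof. intro H. rewrite !vint_fl. apply lsum_perm; auto. Qed.

Ltac reify t := lazymatch t with
 | pl ?x ?y => let u := reify x in let v := reify y in constr:(VP u v)
 | o => constr:(VZ)
 | ?z => constr:(VA z) end.
Lemma perm_cons_inv (x : term) l l2 l2' : Permutation l l2' -> Permutation (x :: l2') l2 -> Permutation (x :: l) l2.
Proof. intros H1 H2. eapply perm_trans; [apply perm_skip; exact H1| exact H2]. Qed.
Ltac move_front := lazymatch goal with
 | |- Permutation (?x :: _) (?h :: _) => tryif constr_eq x h then (apply perm_skip; apply Permutation_refl)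
        else (eapply perm_trans; [apply perm_swap | apply perm_skip; move_front]) end.
Ltac perm_solve := lazymatch goal with
 | |- Permutation nil nil => apply perm_nil
 | |- Permutation (?x :: ?l) ?l2 => eapply perm_cons_inv; [ | move_front ]; perm_solve end.
Ltac ac := lazymatch goal with |- D ?L ?R =>
  let e1 := reify L in let e2 := reify R in change (D (vint e1) (vint e2));
  apply ac_lemma; cbn [vfl app]; perm_solve end.

Lemma ac_test x y z : D (pl (pl x o) (pl y z)) (pl z (pl y x)).
Proof. ac. Qed.
Lemma L_pvo u v : D (p v o (p u v o)) u.
Proof.
  transitivity (p (p o o v) (p o o o) (p u v o)).
  { apply p_proper; [symmetry; apply p_yyx| symmetry; apply p_xyy| reflexivity]. }
  rewrite p_inter. rewrite (p_yyx o u), (p_yyx o v), (p_xyy v o), (p_xyy u v). reflexivity.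
Qed.
Lemma L2 u v w : D (p u o (p w v o)) (p u v w).
Proof.
  transitivity (p (p u w w) (p w w o) (p w v o)).
  { apply p_proper; [symmetry; apply p_xyy| symmetry; apply p_yyx| reflexivity]. }
  rewrite p_inter. rewrite (p_xyy u w), (p_yyx w v), (p_xyy w o). reflexivity.
Qed.

Lemma expand x y : D (Op x y) (pl (pl k (a x)) (b y)).
Proof.
  symmetry. unfold pl at 2. unfold a.
  rewrite (L_pvo (Op x o) k). unfold pl, b. rewrite L2.
  transitivity (Op (p x o o) (p o o y)).
  { symmetry. apply Op_p. }
  rewrite (p_xyy x o), (p_yyx o y). reflexivity.
Qed.

Lemma a_pl x y : D (a (pl x y)) (pl (a x) (a y)).
Proof.
  unfold a at 1.
  transitivity (p (p (Op x o) k (Op y o)) k o).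
  { apply p_proper; [|reflexivity|reflexivity].
    transitivity (Op (p x o y) (p o o o)).
    { apply Op_proper; [reflexivity| symmetry; apply p_xyy]. }
    apply Op_p. }
  transitivity (p (p (Op x o) k (Op y o)) (p k k k) (p o o o)).
  { apply p_proper; [reflexivity| symmetry; apply p_xyy| symmetry; apply p_xyy]. }
  rewrite p_inter. rewrite (p_yyx k o). reflexivity.
Qed.
Lemma b_pl x y : D (b (pl x y)) (pl (b x) (b y)).
Proof.
  unfold b at 1.
  transitivity (p (p (Op o x) k (Op o y)) k o).
  { apply p_proper; [|reflexivity|reflexivity].
    transitivity (Op (p o o o) (p x o y)).
    { apply Op_proper; [symmetry; apply p_xyy| reflexivity]. }
    apply Op_p. }
  transitivity (p (p (Op o x) k (Op o y)) (p k k k) (p o o o)).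
  { apply p_proper; [reflexivity| symmetry; apply p_xyy| symmetry; apply p_xyy]. }
  rewrite p_inter. rewrite (p_yyx k o). reflexivity.
Qed.
Lemma a_o : D (a o) o.
Proof. exact (p_yyx k o). Qed.
Lemma b_o : D (b o) o.
Proof. exact (p_yyx k o). Qed.

Definition S0 := pl (pl k (a k)) (pl (a (b k)) (b k)).

Lemma aa_S x : D (pl (a (a x)) S0) x.
Proof.
  pose proof (axI x o) as H. change (D (Op (Op x k) k) x) in H.
  rewrite (expand (Op x k) k), (expand x k) in H.
  rewrite !a_pl in H. etransitivity; [|exact H]. unfold S0. ac.
Qed.
Lemma S0_o : D S0 o.
Proof.
  pose proof (aa_S o) as H. rewrite !a_o in H. etransitivity; [|exact H]. ac.
Qed.
Lemma aa x : D (a (a x)) x.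
Proof. etransitivity; [|exact (aa_S x)]. rewrite S0_o. symmetry; apply pl_o_r. Qed.

Lemma bb x : D (b (b x)) x.
Proof.
  pose proof (axP x o o o) as H. change (D (Op (Op x o) k) (Op k (Op o x))) in H.
  rewrite (expand (Op x o) k), (expand x o), (expand k (Op o x)), (expand o x) in H.
  rewrite !a_pl, !b_pl, ?a_o, ?b_o, aa in H.
  symmetry. apply (cancel_r _ _ (pl (pl k (a k)) (b k))).
  transitivity (pl (pl k (pl (pl (a k) x) o)) (b k)); [ac|].
  etransitivity; [exact H|]. ac.
Qed.

Lemma ab x : D (a (b x)) (b (a x)).
Proof.
  pose proof (axM o x o o) as H. change (D (Op (Op o x) k) (Op k (Op x o))) in H.
  rewrite (expand (Op o x) k), (expand o x), (expand k (Op x o)), (expand x o) in H.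
  rewrite !a_pl, !b_pl, ?a_o, ?b_o in H.
  apply (cancel_r _ _ (pl (pl k (a k)) (b k))).
  etransitivity; [|etransitivity; [exact H|]]; ac.
Qed.

Lemma Nlaw y : D (pl (pl y (a y)) (pl (b y) (a (b y)))) o.
Proof.
  pose proof (axI o y) as H.
  rewrite (expand (Op o (Op y y)) (Op y y)), (expand o (Op y y)), (expand y y) in H.
  rewrite !a_pl, !b_pl, ?a_o, ?b_o in H.
  rewrite ?aa, ?bb in H. rewrite !a_pl in H.
  rewrite (ab (a y)), aa, <- (ab y) in H.
  transitivity (pl (pl (pl y (a y)) (pl (b y) (a (b y)))) S0).
  { rewrite S0_o. symmetry. apply pl_o_r. }
  etransitivity; [|exact H]. unfold S0. ac.
Qed.

Inductive q4 := Q4 (n0 n1 n2 n3 : nat).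
Definition q4add (u v : q4) := let (a0,a1,a2,a3) := u in let (b0,b1,b2,b3) := v in
  Q4 (a0+b0) (a1+b1) (a2+b2) (a3+b3).
Definition qA (u : q4) := let (n0,n1,n2,n3) := u in Q4 n1 n0 n3 n2.
Definition qB (u : q4) := let (n0,n1,n2,n3) := u in Q4 n2 n3 n0 n1.
Definition q1 := Q4 1 0 0 0.
Definition q0 := Q4 0 0 0 0.

Fixpoint coef (x : nat) (t : term) : q4 :=
  match t with Var y => if Nat.eqb y x then q1 else q0
  | Op s u => q4add (qA (coef x s)) (qB (coef x u)) end.
Fixpoint rr (t : term) : q4 :=
  match t with Var _ => q0
  | Op s u => q4add (q4add (qA (rr s)) (qB (rr u))) q1 end.

Fixpoint nmul (n : nat) (y : term) : term :=
  match n with 0 => o | S n => pl y (nmul n y) end.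
Definition Scal (c : q4) (y : term) : term := let (n0,n1,n2,n3) := c in
  pl (pl (nmul n0 y) (nmul n1 (a y))) (pl (nmul n2 (b y)) (nmul n3 (a (b y)))).
Fixpoint vsum (n : nat) (t : term) : term :=
  match n with 0 => o | S n => pl (vsum n t) (Scal (coef n t) (Var n)) end.
Definition Canon n t := pl (vsum n t) (Scal (rr t) k).

#[export] Instance nmul_proper n : Proper (D ==> D) (nmul n).
Proof. intros x y H. induction n; simpl; [reflexivity| apply pl_proper; auto]. Qed.
#[export] Instance Scal_proper c : Proper (D ==> D) (Scal c).
Proof. intros x y H. destruct c; simpl. rewrite H. reflexivity. Qed.

Lemma nmul_add i j y : D (nmul (i + j) y) (pl (nmul i y) (nmul j y)).
Proof.
  induction i; simpl.
  - symmetry; apply pl_o_l.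
  - rewrite IHi. symmetry; apply pl_assoc.
Qed.
Lemma nmul_o i : D (nmul i o) o.
Proof. induction i; simpl; [reflexivity| rewrite IHi; apply pl_o_l]. Qed.
Lemma nmul_pl i u v : D (nmul i (pl u v)) (pl (nmul i u) (nmul i v)).
Proof.
  induction i; simpl.
  - symmetry; apply pl_o_l.
  - rewrite IHi. apply pl_inter.
Qed.
Lemma a_nmul i z : D (a (nmul i z)) (nmul i (a z)).
Proof. induction i; simpl; [apply a_o| rewrite a_pl, IHi; reflexivity]. Qed.
Lemma b_nmul i z : D (b (nmul i z)) (nmul i (b z)).
Proof. induction i; simpl; [apply b_o| rewrite b_pl, IHi; reflexivity]. Qed.

Lemma Scal_add c d y : D (pl (Scal c y) (Scal d y)) (Scal (q4add c d) y).
Proof.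
  destruct c, d; simpl. rewrite !nmul_add.
  rewrite pl_inter. rewrite (pl_inter (nmul n0 y)). rewrite (pl_inter (nmul n2 (b y))).
  reflexivity.
Qed.
Lemma a_Scal c y : D (a (Scal c y)) (Scal (qA c) y).
Proof.
  destruct c; simpl. rewrite !a_pl, !a_nmul, !aa. ac.
Qed.
Lemma b_Scal c y : D (b (Scal c y)) (Scal (qB c) y).
Proof.
  destruct c; simpl. rewrite !b_pl, !b_nmul, <- (ab (b y)), !bb, <- (ab y). ac.
Qed.
Lemma Scal_q1 y : D (Scal q1 y) y.
Proof. simpl. transitivity (pl y o); [ac| apply pl_o_r]. Qed.
Lemma Scal_q0 y : D (Scal q0 y) o.
Proof. simpl. ac. Qed.
Lemma Scal_N j y : D (Scal (Q4 j j j j) y) o.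
Proof.
  simpl. rewrite <- !nmul_pl. rewrite Nlaw. apply nmul_o.
Qed.
Lemma Scal_equiv c d j j' y : q4add c (Q4 j' j' j' j') = q4add d (Q4 j j j j) ->
  D (Scal c y) (Scal d y).
Proof.
  intro H.
  transitivity (pl (Scal c y) (Scal (Q4 j' j' j' j') y)).
  { rewrite Scal_N. symmetry; apply pl_o_r. }
  rewrite Scal_add, H, <- Scal_add, Scal_N. apply pl_o_r.
Qed.

Lemma vsum_var n x : D (vsum n (Var x)) (if Nat.ltb x n then Var x else o).
Proof.
  induction n; simpl.
  - reflexivity.
  - rewrite IHn. destruct (Nat.eqb_spec x n) as [->|Hne].
    + rewrite Nat.ltb_irrefl, Scal_q1. replace (Nat.ltb n (S n)) with true
        by (symmetry; apply Nat.ltb_lt; lia). apply pl_o_l.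
    + rewrite Scal_q0, pl_o_r.
      replace (Nat.ltb x (S n)) with (Nat.ltb x n); [reflexivity|].
      destruct (Nat.ltb_spec x n), (Nat.ltb_spec x (S n)); auto; lia.
Qed.

Lemma vsum_op n s u : D (pl (a (vsum n s)) (b (vsum n u))) (vsum n (Op s u)).
Proof.
  induction n; simpl.
  - rewrite a_o, b_o. apply pl_o_r.
  - rewrite a_pl, b_pl, pl_inter, IHn, a_Scal, b_Scal, Scal_add. reflexivity.
Qed.

Fixpoint vb (t : term) : nat := match t with Var x => S x | Op s u => Nat.max (vb s) (vb u) end.

Lemma canon t n : vb t <= n -> D t (Canon n t).
Proof.
  induction t as [x|s IHs u IHu]; intro Hb; unfold Canon.
  - simpl in Hb. rewrite vsum_var. replace (Nat.ltb x n) with true by (symmetry; apply Nat.ltb_lt; lia).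
    simpl rr. rewrite Scal_q0. symmetry; apply pl_o_r.
  - simpl in Hb. rewrite (IHs ltac:(lia)), (IHu ltac:(lia)) at 1.
    rewrite expand. unfold Canon. rewrite a_pl, b_pl, a_Scal, b_Scal.
    rewrite <- vsum_op. simpl rr. rewrite <- !Scal_add, Scal_q1. ac.
Qed.
Open Scope Z_scope.
Definition chi (cA cB : Z) (c : q4) : Z := let (n0,n1,n2,n3) := c in
  Z.of_nat n0 + cA * Z.of_nat n1 + cB * Z.of_nat n2 + cA*cB*Z.of_nat n3.

Lemma eval_ind cA cB op (Hop : forall x y, op x y = cA*x + cB*y)
  (HA : cA = 1 \/ cA = -1) (HB : cB = 1 \/ cB = -1) x t :
  eval op (fun n => if Nat.eqb n x then 1 else 0) t = chi cA cB (coef x t).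
Proof.
  induction t as [y|s IHs u IHu]; simpl.
  - destruct (Nat.eqb y x); destruct HA as [->| ->], HB as [->| ->]; reflexivity.
  - rewrite Hop, IHs, IHu. destruct (coef x s), (coef x u). simpl.
    destruct HA as [->| ->], HB as [->| ->]; lia.
Qed.

Lemma eval_one cA cB op (Hop : forall x y, op x y = cA*x + cB*y)
  (HA : cA = 1 \/ cA = -1) (HB : cB = 1 \/ cB = -1) t :
  eval op (fun _ => 1) t - 1 = (cA + cB - 1) * chi cA cB (rr t).
Proof.
  induction t as [y|s IHs u IHu]; simpl.
  - lia.
  - rewrite Hop. destruct (rr s), (rr u). simpl in *.
    destruct HA as [->| ->], HB as [->| ->]; lia.
Qed.

Lemma q4_ext c d : chi 1 (-1) c = chi 1 (-1) d -> chi (-1) 1 c = chi (-1) 1 d ->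
  chi (-1) (-1) c = chi (-1) (-1) d -> exists j j', q4add c (Q4 j' j' j' j') = q4add d (Q4 j j j j).
Proof.
  destruct c as [a0 a1 a2 a3], d as [b0 b1 b2 b3]; unfold chi, q4add; intros H1 H2 H3.
  exists a0, b0. f_equal; lia.
Qed.

Lemma Hop2 x y : op2 x y = 1*x + (-1)*y. Proof. unfold op2; lia. Qed.
Lemma Hop3 x y : op3 x y = (-1)*x + 1*y. Proof. unfold op3; lia. Qed.
Lemma Hop4 x y : op4 x y = (-1)*x + (-1)*y. Proof. unfold op4; lia. Qed.

Lemma coef_eq s t x : Sigma234 s t -> exists j j', q4add (coef x s) (Q4 j' j' j' j') = q4add (coef x t) (Q4 j j j j).
Proof.
  intros [H2 [H3 H4]]. apply q4_ext.
  - rewrite <- !(eval_ind 1 (-1) op2 Hop2 ltac:(lia) ltac:(lia)). apply H2.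
  - rewrite <- !(eval_ind (-1) 1 op3 Hop3 ltac:(lia) ltac:(lia)). apply H3.
  - rewrite <- !(eval_ind (-1) (-1) op4 Hop4 ltac:(lia) ltac:(lia)). apply H4.
Qed.

Lemma rr_eq s t : Sigma234 s t -> exists j j', q4add (rr s) (Q4 j' j' j' j') = q4add (rr t) (Q4 j j j j).
Proof.
  intros [H2 [H3 H4]]. apply q4_ext.
  - pose proof (eval_one 1 (-1) op2 Hop2 ltac:(lia) ltac:(lia) s).
    pose proof (eval_one 1 (-1) op2 Hop2 ltac:(lia) ltac:(lia) t).
    rewrite (H2 (fun _ => 1)) in *. lia.
  - pose proof (eval_one (-1) 1 op3 Hop3 ltac:(lia) ltac:(lia) s).
    pose proof (eval_one (-1) 1 op3 Hop3 ltac:(lia) ltac:(lia) t).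
    rewrite (H3 (fun _ => 1)) in *. lia.
  - pose proof (eval_one (-1) (-1) op4 Hop4 ltac:(lia) ltac:(lia) s).
    pose proof (eval_one (-1) (-1) op4 Hop4 ltac:(lia) ltac:(lia) t).
    rewrite (H4 (fun _ => 1)) in *. lia.
Qed.
Close Scope Z_scope.

Lemma vsum_eq n s t : Sigma234 s t -> D (vsum n s) (vsum n t).
Proof.
  intro H. induction n; simpl; [reflexivity|].
  rewrite IHn. destruct (coef_eq s t n H) as [j [j' Hj]].
  rewrite (Scal_equiv _ _ _ _ (Var n) Hj). reflexivity.
Qed.

Lemma complete s t : Sigma234 s t -> D s t.
Proof.
  intro H. set (n := Nat.max (vb s) (vb t)).
  rewrite (canon s n) by lia. rewrite (canon t n) at 1 by lia.
  unfold Canon. rewrite (vsum_eq n s t H).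
  destruct (rr_eq s t H) as [j [j' Hj]]. rewrite (Scal_equiv _ _ _ _ k Hj). reflexivity.
Qed.

Lemma eval_subst {T} (op : T -> T -> T) v sg s :
  eval op v (subst sg s) = eval op (fun n => eval op v (sg n)) s.
Proof. induction s; simpl; congruence. Qed.

Lemma ax_sound op : (op = op2 \/ op = op3 \/ op = op4) ->
  forall s t, In (s,t) basis_234 -> forall v, eval op v s = eval op v t.
Proof.
  intros Hop s t Hin v. simpl in Hin.
  destruct Hin as [H|[H|[H|[]]]]; inversion H; subst;
  destruct Hop as [ -> | [ -> | -> ]]; unfold vx, vy, vz, vt, sq; simpl; unfold op2, op3, op4; lia.
Qed.

Lemma sound_op op : (op = op2 \/ op = op3 \/ op = op4) ->
  forall s t, derivable basis_234 s t -> forall v, eval op v s = eval op v t.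
Proof.
  intros Hop s t H. induction H; intro v.
  - rewrite !eval_subst. apply ax_sound; auto.
  - reflexivity.
  - symmetry; auto.
  - rewrite IHderivable1; auto.
  - simpl. rewrite IHderivable1, IHderivable2. reflexivity.
Qed.

Theorem theorem7p2 :
  forall s t : term, derivable basis_234 s t <-> Sigma234 s t.
Proof.
  intros s t. split.
  - intro H. split; [|split]; intro v.
    + apply (sound_op op2 (or_introl eq_refl)); auto.
    + apply (sound_op op3 (or_intror (or_introl eq_refl))); auto.
    + apply (sound_op op4 (or_intror (or_intror eq_refl))); auto.
  - apply complete.
Qed.
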